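(* Let $\mathbb{X}$ be a complete intersection of type $(d_1,d_2)$ in $\mathbb{P}^1\times\mathbb{P}^1$ over a field $K$ of characteristic zero with $d_1\le d_2$, with coordinates chosen so that $x_0,y_0$ is a regular sequence in $R_{\mathbb{X}}$. Then the first difference function $\Delta$ of $\operatorname{HF}_{\vartheta_{\mathbb{X}}}$ satisfies, for $(i,j)\in\mathbb{N}^2$: $\Delta(i,j)=1$ if $d_1-1\le i\le 2d_1-2$ and $d_2-1\le j\le 2d_2-2$, and $\Delta(i,j)=0$ otherwise.
   Context: $S=K[X_0,X_1,Y_0,Y_1]$ with $\deg X_i=(1,0)$, $\deg Y_i=(0,1)$. $\mathbb{X}$ is a complete intersection of type $(d_1,d_2)$ if its vanishing ideal $I_{\mathbb{X}}$ is generated by bihomogeneous polynomials of degrees $(d_1,0)$ and $(0,d_2)$. $R_{\mathbb{X}}=S/I_{\mathbb{X}}$, $x_i,y_i$ the images of $X_i,Y_i$. The Kähler different $\vartheta_{\mathbb{X}}$ is the ideal of $R_{\mathbb{X}}$ generated by the residue classes of $\frac{\partial F_a}{\partial X_1}\frac{\partial F_b}{\partial Y_1}-\frac{\partial F_b}{\partial X_1}\frac{\partial F_a}{\partial Y_1}$ for bihomogeneous generators $F_1,\dots,F_u$ of $I_{\mathbb{X}}$; $\operatorname{HF}_{\vartheta_{\mathbb{X}}}(i,j)=\dim_K(\vartheta_{\mathbb{X}})_{i,j}$. The first difference function of $H$ is $\Delta H(i,j)=H(i,j)-H(i-1,j)-H(i,j-1)+H(i-1,j-1)$ with $H(i,j)=0$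 if $i<0$ or $j<0$. *)

(* Defs.v *)
From Stdlib Require Import ClassicalEpsilon.
From mathcomp Require Import all_boot all_order all_algebra.
From mathcomp Require Import mpoly.
Set Implicit Arguments. Unset Strict Implicit. Unset Printing Implicit Defensive.
Import GRing.Theory.
Local Open Scope ring_scope.

(* S = K[X_0,X_1,Y_0,Y_1] is {mpoly K[4]} with variables
   X_0 = 'X_0, X_1 = 'X_1, Y_0 = 'X_2, Y_1 = 'X_3. *)
Definition iX0 : 'I_4 := @Ordinal 4 0 isT.
Definition iX1 : 'I_4 := @Ordinal 4 1 isT.
Definition iY0 : 'I_4 := @Ordinal 4 2 isT.
Definition iY1 : 'I_4 := @Ordinal 4 3 isT.

Section Bigraded.
Variable K : fieldType.
Notation S := {mpoly K[4]}.

Definition mbideg (m : 'X_{1..4}) : nat * nat := (m iX0 + m iX1, m iY0 + m iY1)%N.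

(* p is bihomogeneous of degree (i,j) (0 is bihomogeneous of every degree) *)
Definition bihom (i j : nat) (p : S) : Prop :=
  forall m, m \in msupp p -> mbideg m = (i, j).

Definition bicomp (i j : nat) (p : S) : S :=
  \sum_(m <- msupp p | mbideg m == (i, j)) p@_m *: 'X_[m].

(* a point of P^1 x P^1 given by representatives ([a0:a1],[b0:b1]) *)
Definition point_ok (P : (K * K) * (K * K)) : Prop :=
  (P.1 != (0, 0)) /\ (P.2 != (0, 0)).

Definition eval_pt (P : (K * K) * (K * K)) (p : S) : K :=
  p.@[fun k : 'I_4 => match val k with
                      | 0 => P.1.1 | 1 => P.1.2 | 2 => P.2.1 | _ => P.2.2 end].

(* vanishing ideal I_X: the ideal generated by the bihomogeneous polynomials
   vanishing on X; p belongs to it iff all its bihomogeneous components vanish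
   at every point of X. *)
Definition in_vanishing_ideal (X : seq ((K * K) * (K * K))) (p : S) : Prop :=
  forall i j P, P \in X -> eval_pt P (bicomp i j p) = 0.

Definition in_ideal (gs : seq S) (p : S) : Prop :=
  exists c : nat -> S, p = \sum_(k < size gs) c k * gs`_k.

(* generators of the ideal of S whose image in R_X is the Kähler different:
   dF_a/dX_1 * dF_b/dY_1 - dF_b/dX_1 * dF_a/dY_1 for generators F_a, F_b *)
Definition kahler_gens (gs : seq S) : seq S :=
  [seq (a^`M(iX1)) * (b^`M(iY1)) - (b^`M(iX1)) * (a^`M(iY1)) | a <- gs, b <- gs].

(* dimension of a (finite-dim) space described via "there is an independent
   family of size n": the largest such n (0 if no largest exists). *)
Definition maxnat (P : nat -> Prop) : nat :=
  match excluded_middle_informative (exists n, P n /\ forall m, P m -> (m <= n)%N) with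
  | left h => proj1_sig (constructive_indefinite_description _ h)
  | right _ => 0%N
  end.

(* HF of an ideal of R = S / I, whose preimage contains I and is generated
   (together with I) by the list Jg:  dim_K of its (i,j) piece, i.e. the
   maximal number of bihomogeneous elements of degree (i,j) of the ideal
   (Jg) of S that are K-linearly independent modulo I. *)
Definition HF_quot_ideal (I : S -> Prop) (Jg : seq S) (i j : nat) : nat :=
  maxnat (fun n => exists g : 'I_n -> S,
     (forall k, in_ideal Jg (g k) /\ bihom i j (g k)) /\
     (forall c : 'I_n -> K, I (\sum_(k < n) c k *: g k) -> forall k, c k = 0)).

End Bigraded.

(* first difference function, with H(i,j) = 0 for i < 0 or j < 0 *)
Definition Delta (H : nat -> nat -> nat) (i j : nat) : int :=
  (H i j)%:Z
  - (if i is i'.+1 then (H i' j)%:Z else 0)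
  - (if j is j'.+1 then (H i j')%:Z else 0)
  + (match i, j with i'.+1, j'.+1 => (H i' j')%:Z | _, _ => 0 end).

(* Main.v *)
Require Import Defs.
From mathcomp Require Import all_boot all_order all_algebra.
From mathcomp Require Import mpoly.
From mathcomp Require Import zify ring.
From Stdlib Require Import ClassicalEpsilon.
Set Implicit Arguments. Unset Strict Implicit. Unset Printing Implicit Defensive.
Import GRing.Theory.
Local Open Scope ring_scope.

Section Basics.
Variable K : fieldType.
Notation S := {mpoly K[4]}.

Lemma bihomP i j (p : S) : bihom i j p <-> (forall m, p@_m != 0 -> mbideg m = (i, j)).
Proof.
split=> h m; first by rewrite -mcoeff_msupp; apply: h.
by rewrite mcoeff_msupp; apply: h.
Qed.

Lemma bihom0 i j : bihom i j (0 : S).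
Proof. by apply/bihomP=> m; rewrite mcoeff0 eqxx. Qed.

Lemma bihomD i j (p q : S) : bihom i j p -> bihom i j q -> bihom i j (p + q).
Proof.
move=> /bihomP hp /bihomP hq; apply/bihomP=> m; rewrite mcoeffD.
case: (eqVneq p@_m 0) => [->|/hp //]; rewrite add0r; exact: hq.
Qed.

Lemma bihomN i j (p : S) : bihom i j p -> bihom i j (- p).
Proof. by move=> /bihomP hp; apply/bihomP=> m; rewrite mcoeffN oppr_eq0; apply: hp. Qed.

Lemma bihomZ i j c (p : S) : bihom i j p -> bihom i j (c *: p).
Proof.
move=> /bihomP hp; apply/bihomP=> m; rewrite mcoeffZ mulf_eq0 negb_or => /andP[_].
exact: hp.
Qed.

Lemma bihom_sum i j (I : Type) (r : seq I) (P : pred I) (f : I -> S) :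
  (forall k, P k -> bihom i j (f k)) -> bihom i j (\sum_(k <- r | P k) f k).
Proof.
move=> h; elim/big_rec: _ => [|k x Pk hx]; first exact: bihom0.
by apply: bihomD => //; apply: h.
Qed.

Lemma mbidegD m1 m2 : mbideg (m1 + m2)%MM =
  ((mbideg m1).1 + (mbideg m2).1, (mbideg m1).2 + (mbideg m2).2)%N.
Proof. by rewrite /mbideg !mnmDE /=; congr pair; rewrite addnACA. Qed.

Lemma bihomM i1 j1 i2 j2 (p q : S) : bihom i1 j1 p -> bihom i2 j2 q ->
  bihom (i1 + i2) (j1 + j2) (p * q).
Proof.
move=> hp hq m /msuppM_le /allpairsP [[m1 m2] /= [h1 h2 ->]].
by rewrite mbidegD (hp _ h1) (hq _ h2).
Qed.

Lemma bihomX m : bihom (mbideg m).1 (mbideg m).2 ('X_[m] : S).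
Proof. by move=> m'; rewrite msuppX mem_seq1 => /eqP ->; case: (mbideg m). Qed.

Lemma bihomC c : bihom 0 0 (c%:MP : S).
Proof.
apply/bihomP=> m; rewrite mcoeffC; case: (eqVneq m 0%MM) => [->|_].
  by rewrite /mbideg !mnm0E.
by rewrite mulr0 eqxx.
Qed.

Lemma bihom_Xi (k : 'I_4) : bihom (if val k < 2 then 1 else 0)%N (if val k < 2 then 0 else 1)%N ('X_k : S).
Proof.
have := @bihomX (U_(k))%MM; rewrite /mbideg !mnm1E.
by case: k => -[|[|[|[|]]]] //= _ ; rewrite /iX0 /iX1 /iY0 /iY1 /=;
  rewrite /eq_op /= ?eqxx /=.
Qed.

End Basics.

Definition mon (s t a b : nat) : 'X_{1..4} :=
  [multinom (match val i with 0 => s - a | 1 => a | 2 => t - b | _ => b end)%N | i < 4].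

Lemma mon0 s t a b : mon s t a b iX0 = (s - a)%N. Proof. by rewrite mnmE. Qed.
Lemma mon1 s t a b : mon s t a b iX1 = a. Proof. by rewrite mnmE. Qed.
Lemma mon2 s t a b : mon s t a b iY0 = (t - b)%N. Proof. by rewrite mnmE. Qed.
Lemma mon3 s t a b : mon s t a b iY1 = b. Proof. by rewrite mnmE. Qed.

Lemma mon_bideg s t a b : (a <= s)%N -> (b <= t)%N -> mbideg (mon s t a b) = (s, t).
Proof. by move=> ha hb; rewrite /mbideg mon0 mon1 mon2 mon3 !subnK. Qed.

Lemma mon_uniq s t m : mbideg m = (s, t) -> m = mon s t (m iX1) (m iY1).
Proof.
rewrite /mbideg => -[<- <-]; apply/mnmP => -[[|[|[|[|//]]]] h]; rewrite mnmE /=.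
- by rewrite addnK; congr (m _); apply: val_inj.
- by congr (m _); apply: val_inj.
- by rewrite addnK; congr (m _); apply: val_inj.
- by congr (m _); apply: val_inj.
Qed.

Lemma mon_inj s t a b a' b' : mon s t a b = mon s t a' b' -> a = a' /\ b = b'.
Proof. by move=> e; split; [rewrite -(mon1 s t a b) e mon1 | rewrite -(mon3 s t a b) e mon3]. Qed.

Section Expand.
Variable K : fieldType.
Notation S := {mpoly K[4]}.

Lemma bihom_expand s t (p : S) : bihom s t p ->
  p = \sum_(a < s.+1) \sum_(b < t.+1) p@_(mon s t a b) *: 'X_[mon s t a b].
Proof.
move=> /bihomP hp; apply/mpolyP => m.
rewrite raddf_sum /=.
have -> : \sum_(i < s.+1) mcoeff m (\sum_(b < t.+1) p@_(mon s t i b) *: 'X_[mon s t i b])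
  = \sum_(a < s.+1) \sum_(b < t.+1) p@_(mon s t a b) * (mon s t a b == m)%:R.
  apply: eq_bigr => a _; rewrite raddf_sum; apply: eq_bigr => b _.
  by rewrite /= mcoeffZ mcoeffX.
case: (eqVneq (p@_m) 0) => [p0|pn0].
  rewrite p0 big1 // => a _; rewrite big1 // => b _.
  case: (eqVneq (mon s t a b) m) => [e|]; last by rewrite mulr0.
  by rewrite e p0 mul0r.
have hm := hp _ pn0; have em := mon_uniq hm.
move: hm; rewrite /mbideg => -[ha hb].
have la : (m iX1 < s.+1)%N by rewrite ltnS -ha leq_addl.
have lb : (m iY1 < t.+1)%N by rewrite ltnS -hb leq_addl.
rewrite (bigD1 (Ordinal la)) //= (bigD1 (Ordinal lb)) //= -em eqxx mulr1.
rewrite big1 ?addr0; last first.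
  move=> b /= nb; case: (eqVneq (mon s t (m iX1) b) m) => [e|]; last by rewrite mulr0.
  by move: nb; rewrite -val_eqE /= -e mon3 eqxx.
rewrite big1 ?addr0 // => a /= na; rewrite big1 // => b _.
case: (eqVneq (mon s t a b) m) => [e|]; last by rewrite mulr0.
by move: na; rewrite -val_eqE /= -e mon1 eqxx.
Qed.

Lemma meval_bihom s t (p : S) v : bihom s t p ->
  p.@[v] = \sum_(a < s.+1) \sum_(b < t.+1) p@_(mon s t a b) *
     (v iX0 ^+ (s - a) * v iX1 ^+ a * v iY0 ^+ (t - b) * v iY1 ^+ b).
Proof.
move=> hp; rewrite {1}(bihom_expand hp) raddf_sum /=; apply: eq_bigr => a _.
rewrite raddf_sum /=; apply: eq_bigr => b _; rewrite mevalZ mevalX; congr (_ * _).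
rewrite big_ord_recl big_ord_recl big_ord_recl big_ord1 /=.
rewrite /mon !mnmE /= -!mulrA.
have -> : lift ord0 ord0 = iX1 by apply: val_inj.
have -> : lift ord0 (lift ord0 ord0) = iY0 by apply: val_inj.
have -> : lift ord0 (lift ord0 (lift ord0 ord0)) = iY1 by apply: val_inj.
by have -> : ord0 = iX0 by apply: val_inj.
Qed.

End Expand.

Section Bicomp.
Variable K : fieldType.
Notation S := {mpoly K[4]}.

Lemma sum_delta (T : eqType) (s : seq T) (f : T -> K) m : uniq s ->
  \sum_(x <- s) f x * (x == m)%:R = if m \in s then f m else 0.
Proof.
elim: s => [|x s IH] /=; first by rewrite big_nil.
case/andP=> xs us; rewrite big_cons IH // in_cons.
case: (eqVneq x m) => [<-|nxm] /=; first by rewrite (negbTE xs) mulr1 addr0.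
by rewrite mulr0 add0r.
Qed.

Lemma bicomp_coef i j (p : S) m :
  (bicomp i j p)@_m = if mbideg m == (i, j) then p@_m else 0.
Proof.
rewrite /bicomp raddf_sum /=.
under eq_bigr do rewrite mcoeffZ mcoeffX.
rewrite -big_filter sum_delta ?filter_uniq ?msupp_uniq // mem_filter.
case: (mbideg m == (i, j)) => //=.
by case: (boolP (m \in msupp p)) => // /memN_msupp_eq0 ->.
Qed.

Lemma bicomp_id i j (p : S) : bihom i j p -> bicomp i j p = p.
Proof.
move=> /bihomP hp; apply/mpolyP => m; rewrite bicomp_coef.
case: eqP => // ne; case: (eqVneq (p@_m) 0) => // /hp //.
Qed.

Lemma bicomp_ne i j i' j' (p : S) : bihom i j p -> (i', j') != (i, j) ->
  bicomp i' j' p = 0.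
Proof.
move=> /bihomP hp ne; apply/mpolyP => m; rewrite bicomp_coef mcoeff0.
case: eqP => // e; case: (eqVneq (p@_m) 0) => // /hp e'.
by move: ne; rewrite -e -e' eqxx.
Qed.

Lemma bicompD i j (p q : S) : bicomp i j (p + q) = bicomp i j p + bicomp i j q.
Proof.
by apply/mpolyP => m; rewrite mcoeffD !bicomp_coef mcoeffD; case: ifP; rewrite ?addr0.
Qed.

Lemma bicompZ i j c (p : S) : bicomp i j (c *: p) = c *: bicomp i j p.
Proof.
by apply/mpolyP => m; rewrite mcoeffZ !bicomp_coef mcoeffZ; case: ifP; rewrite ?mulr0.
Qed.

Lemma bicomp0 i j : bicomp i j (0 : S) = 0.
Proof. by apply/mpolyP => m; rewrite bicomp_coef mcoeff0; case: ifP. Qed.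

Lemma bicomp_sum i j (I : Type) (r : seq I) (P : pred I) (f : I -> S) :
  bicomp i j (\sum_(k <- r | P k) f k) = \sum_(k <- r | P k) bicomp i j (f k).
Proof.
exact: (big_morph (bicomp i j) (bicompD i j) (bicomp0 i j)).
Qed.

Lemma bicomp_bihom i j (p : S) : bihom i j (bicomp i j p).
Proof.
by apply/bihomP => m; rewrite bicomp_coef; case: (mbideg m =P (i, j)) => // _; rewrite eqxx.
Qed.

Lemma bicompM e f (h : S) i j a : bihom e f h ->
  bicomp i j (h * a) =
    if (e <= i)%N && (f <= j)%N then h * bicomp (i - e) (j - f) a else 0.
Proof.
move=> hh; rewrite {1}(mpolyE a) mulr_sumr bicomp_sum.
have hX m : bicomp i j (h * (a@_m *: 'X_[m])) =
    if (e + (mbideg m).1 == i)%N && (f + (mbideg m).2 == j)%N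
    then a@_m *: (h * 'X_[m]) else 0.
  rewrite -scalerAr bicompZ.
  have hb := bihomM hh (@bihomX K m).
  case: ifP => [/andP[/eqP <- /eqP <-]|ne]; first by rewrite bicomp_id.
  rewrite (bicomp_ne hb) ?scaler0 //.
  by apply/negP => /eqP [e1 e2]; move: ne; rewrite e1 e2 !eqxx.
under eq_bigr do rewrite hX.
case: ifP => [/andP[hi hj]|ncond].
  rewrite /bicomp mulr_sumr [RHS]big_mkcond /=; apply: eq_bigr => m _.
  have -> : ((e + (mbideg m).1 == i)%N && (f + (mbideg m).2 == j)%N) =
     (mbideg m == (i - e, j - f)%N).
    case: (mbideg m) => x y /=; rewrite xpair_eqE.
    by congr andb; apply/eqP/eqP; lia.
  by case: ifP => // _; rewrite scalerAr.
rewrite big1 // => m _; case: ifP => // /andP[/eqP h1 /eqP h2].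
by move: ncond; rewrite -h1 -h2 !leq_addr.
Qed.

End Bicomp.

Section Eval.
Variable K : fieldType.
Notation S := {mpoly K[4]}.

Definition affv (t u : K) : 'I_4 -> K :=
  fun k => match val k with 0 => 1 | 1 => t | 2 => 1 | _ => u end.

Definition pv (P : (K * K) * (K * K)) : 'I_4 -> K :=
  fun k => match val k with 0 => P.1.1 | 1 => P.1.2 | 2 => P.2.1 | _ => P.2.2 end.

Lemma eval_ptE P (p : S) : eval_pt P p = p.@[pv P].
Proof. by []. Qed.

Lemma scale_aux (x0 x1 : K) s a : x0 != 0 -> (a <= s)%N ->
  x0 ^+ (s - a) * x1 ^+ a = x0 ^+ s * (x1 / x0) ^+ a.
Proof.
move=> nz ha; rewrite expr_div_n -{2}(subnK ha) exprD.
have nza : x0 ^+ a != 0 by rewrite expf_neq0.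
by field.
Qed.

Lemma meval_scale s t (p : S) v : bihom s t p -> v iX0 != 0 -> v iY0 != 0 ->
  p.@[v] = v iX0 ^+ s * v iY0 ^+ t * p.@[affv (v iX1 / v iX0) (v iY1 / v iY0)].
Proof.
move=> hp n0 n2; rewrite (meval_bihom v hp) (meval_bihom (affv _ _) hp) mulr_sumr; apply: eq_bigr => a _.
rewrite mulr_sumr; apply: eq_bigr => b _.
rewrite /affv /= !expr1n !mul1r.
have ha : (a <= s)%N by rewrite -ltnS.
have hb : (b <= t)%N by rewrite -ltnS.
rewrite -mulrA (scale_aux _ n0 ha) (scale_aux _ n2 hb).
ring.
Qed.

Lemma meval_aff s t (p : S) x y : bihom s t p ->
  p.@[affv x y] = \sum_(a < s.+1) \sum_(b < t.+1) p@_(mon s t a b) * (x ^+ a * y ^+ b).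
Proof.
move=> hp; rewrite (meval_bihom (affv x y) hp); apply: eq_bigr => a _; apply: eq_bigr => b _.
by rewrite /affv /= !expr1n !mul1r mulr1.
Qed.

Lemma meval_aff_x d (p : S) x y y' : bihom d 0 p -> p.@[affv x y] = p.@[affv x y'].
Proof.
move=> hp; rewrite !(meval_aff _ _ hp); apply: eq_bigr => a _.
by rewrite !big_ord1 !expr0.
Qed.

Lemma meval_aff_y d (p : S) x x' y : bihom 0 d p -> p.@[affv x y] = p.@[affv x' y].
Proof.
move=> hp; rewrite !(meval_aff _ _ hp) !big_ord1; apply: eq_bigr => b _.
by rewrite !expr0.
Qed.

Definition tau (P : (K * K) * (K * K)) := P.1.2 / P.1.1.
Definition ups (P : (K * K) * (K * K)) := P.2.2 / P.2.1.

Lemma eval_pt_scale s t (p : S) P : bihom s t p -> P.1.1 != 0 -> P.2.1 != 0 ->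
  eval_pt P p = P.1.1 ^+ s * P.2.1 ^+ t * p.@[affv (tau P) (ups P)].
Proof. by move=> hp n0 n2; rewrite eval_ptE (meval_scale hp). Qed.

Lemma vanishP X i j (p : S) : bihom i j p ->
  in_vanishing_ideal X p <-> (forall P, P \in X -> eval_pt P p = 0).
Proof.
move=> hp; split=> h.
  by move=> P PX; have := h i j P PX; rewrite bicomp_id.
move=> i' j' P PX; case: (eqVneq (i', j') (i, j)) => [[-> ->]|ne].
  by rewrite bicomp_id //; apply: h.
by rewrite (bicomp_ne hp ne) /eval_pt meval0.
Qed.

End Eval.

Section Univ.
Variable K : fieldType.

Lemma poly_nz d (c : nat -> K) : (exists2 a, (a <= d)%N & c a != 0) ->
  \poly_(a < d.+1) c a != 0.
Proof.
case=> a ha nz; apply/eqP => e; move: nz.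
have := coef_poly d.+1 c a; rewrite e coef0 ltnS ha => <-.
by rewrite eqxx.
Qed.

Lemma roots_le d (c : nat -> K) (T : seq K) : uniq T ->
  (exists2 a, (a <= d)%N & c a != 0) ->
  (forall t, t \in T -> \sum_(a < d.+1) c a * t ^+ a = 0) -> (size T <= d)%N.
Proof.
move=> uT nz hT; have fnz := poly_nz nz.
have rT : all (root (\poly_(a < d.+1) c a)) T.
  by apply/allP => t tT; rewrite /root horner_poly hT.
have h := max_poly_roots fnz rT uT.
by rewrite -ltnS; apply: leq_trans h (size_poly _ _).
Qed.

Lemma deriv_nz d (c : nat -> K) (T : seq K) : uniq T -> size T = d ->
  (exists2 a, (a <= d)%N & c a != 0) ->
  (forall t, t \in T -> \sum_(a < d.+1) c a * t ^+ a = 0) ->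
  forall t, t \in T -> \sum_(a < d) (c a.+1 *+ a.+1) * t ^+ a != 0.
Proof.
move=> uT sT nz hT t tT.
set f := \poly_(a < d.+1) c a.
have fnz : f != 0 := poly_nz nz.
have rf : forall x, x \in T -> root f x by move=> x xT; rewrite /root horner_poly hT.
have sf : (size f <= d.+1)%N by apply: size_poly.
have -> : \sum_(a < d) (c a.+1 *+ a.+1) * t ^+ a = (f^`()).[t].
  rewrite (@horner_coef_wide _ d); last first.
    by rewrite -ltnS; apply: leq_trans (lt_size_deriv fnz) sf.
  apply: eq_bigr => a _; rewrite coef_deriv coef_poly.
  by rewrite ltnS ltn_ord.
have /factor_theorem [q fq] := rf t tT.
have qnz : q != 0 by apply: contraNneq fnz => q0; rewrite fq q0 mul0r.
rewrite fq derivM derivXsubC mulr1 hornerD hornerM !hornerE subrr mulr0 add0r.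
apply/negP => qt.
have : all (root q) T.
  apply/allP => x xT; case: (eqVneq x t) => [->//|nxt].
  have := rf x xT; rewrite fq /root hornerM !hornerE mulf_eq0.
  by rewrite subr_eq0 (negbTE nxt) orbF.
move=> /(max_poly_roots qnz) /(_ uT) => hs.
move: sf; rewrite fq size_Mmonic ?monicXsubC // size_XsubC addn2 /=.
by rewrite ltnS leqNgt -sT hs.
Qed.

End Univ.

Section Kahler.
Variable K : fieldType.
Notation S := {mpoly K[4]}.

Lemma mbidegUX1 m : mbideg (m + U_(iX1))%MM = ((mbideg m).1.+1, (mbideg m).2).
Proof. by rewrite /mbideg !mnmDE !mnm1E /= !addn0 addn1 addnS. Qed.

Lemma mbidegUY1 m : mbideg (m + U_(iY1))%MM = ((mbideg m).1, (mbideg m).2.+1).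
Proof. by rewrite /mbideg !mnmDE !mnm1E /= !addn0 addn1 addnS. Qed.

Lemma mderiv_bihom_x s t (p : S) : bihom s t p -> bihom s.-1 t (p^`M(iX1)).
Proof.
move=> /bihomP hp; apply/bihomP => m; rewrite mcoeff_deriv.
case: (eqVneq (p@_(m + U_(iX1))%MM) 0) => [->|]; first by rewrite mul0rn eqxx.
move=> /hp; rewrite mbidegUX1 => -[<- <-] _.
by [].
Qed.

Lemma mderiv_bihom_y s t (p : S) : bihom s t p -> bihom s t.-1 (p^`M(iY1)).
Proof.
move=> /bihomP hp; apply/bihomP => m; rewrite mcoeff_deriv.
case: (eqVneq (p@_(m + U_(iY1))%MM) 0) => [->|]; first by rewrite mul0rn eqxx.
move=> /hp; rewrite mbidegUY1 => -[<- <-] _.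
by [].
Qed.

Lemma mderiv_x0 d (p : S) : bihom d 0 p -> p^`M(iY1) = 0.
Proof.
move=> /bihomP hp; apply/mpolyP => m; rewrite mcoeff_deriv mcoeff0.
case: (eqVneq (p@_(m + U_(iY1))%MM) 0) => [->|]; first by rewrite mul0rn.
by move=> /hp; rewrite mbidegUY1.
Qed.

Lemma mderiv_0y d (p : S) : bihom 0 d p -> p^`M(iX1) = 0.
Proof.
move=> /bihomP hp; apply/mpolyP => m; rewrite mcoeff_deriv mcoeff0.
case: (eqVneq (p@_(m + U_(iX1))%MM) 0) => [->|]; first by rewrite mul0rn.
by move=> /hp; rewrite mbidegUX1.
Qed.

Lemma kahlerP d1 d2 (F G : S) : bihom d1 0 F -> bihom 0 d2 G ->
  forall p, in_ideal (kahler_gens [:: F; G]) p <->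
            exists q, p = F^`M(iX1) * G^`M(iY1) * q.
Proof.
move=> hF hG p; rewrite /in_ideal /kahler_gens /= (mderiv_x0 hF) (mderiv_0y hG).
rewrite !mulr0 !mul0r !subrr sub0r subr0.
split=> [[c ->]|[q ->]].
  rewrite !big_ord_recl big_ord0 /=; exists (c 1%N - c 2%N).
  by rewrite /bump /=; ring.
exists (fun k => if k == 1%N then q else 0).
by rewrite !big_ord_recl big_ord0 /= /bump /=; ring.
Qed.

End Kahler.

Section Lin.
Variable K : fieldType.
Notation S := {mpoly K[4]}.

Definition lin (i j : 'I_4) (c0 c1 : K) : S := c0 *: 'X_i - c1 *: 'X_j.

Lemma lin_eval i j c0 c1 v : (lin i j c0 c1).@[v] = c0 * v i - c1 * v j.
Proof. by rewrite /lin mevalB !mevalZ !mevalXU. Qed.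

Lemma bihom_X0 : bihom 1 0 ('X_iX0 : S). Proof. exact: (@bihom_Xi K iX0). Qed.
Lemma bihom_X1 : bihom 1 0 ('X_iX1 : S). Proof. exact: (@bihom_Xi K iX1). Qed.
Lemma bihom_Y0 : bihom 0 1 ('X_iY0 : S). Proof. exact: (@bihom_Xi K iY0). Qed.
Lemma bihom_Y1 : bihom 0 1 ('X_iY1 : S). Proof. exact: (@bihom_Xi K iY1). Qed.

Lemma bihom_linx c0 c1 : bihom 1 0 (lin iX0 iX1 c0 c1).
Proof.
by apply: bihomD; [|apply: bihomN]; apply: bihomZ; [apply: bihom_X0|apply: bihom_X1].
Qed.

Lemma bihom_liny c0 c1 : bihom 0 1 (lin iY0 iY1 c0 c1).
Proof.
by apply: bihomD; [|apply: bihomN]; apply: bihomZ; [apply: bihom_Y0|apply: bihom_Y1].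
Qed.

Lemma bihom_prod (T : Type) a b (l : seq T) (f : T -> S) :
  (forall x, bihom a b (f x)) ->
  bihom (a * size l) (b * size l) (\prod_(x <- l) f x).
Proof.
move=> h; elim: l => [|x l IH]; first by rewrite big_nil !muln0 -mpolyC1; apply: bihomC.
by rewrite big_cons /= !mulnS; apply: bihomM.
Qed.

Lemma meval_prod (T : Type) (l : seq T) (f : T -> S) v :
  (\prod_(x <- l) f x).@[v] = \prod_(x <- l) (f x).@[v].
Proof. exact: rmorph_prod. Qed.

Lemma bihom_const (p : S) : bihom 0 0 p -> p = (p@_0%MM)%:MP.
Proof.
move=> hp; rewrite {1}(bihom_expand hp) !big_ord1.
have -> : mon 0 0 0 0 = 0%MM by apply/mnmP => k; rewrite mnmE mnm0E; case: (val k) => [|[|[|]]].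
by rewrite mpolyX0 -mul_mpolyC mulr1.
Qed.

End Lin.

Definition hh (d i : nat) : nat := if (d.-1 <= i)%N then minn (i - d.-1).+1 d else 0%N.

Definition ind (d i : nat) : bool := (d.-1 <= i)%N && (i <= 2 * d - 2)%N.

Lemma hh0 d : (0 < d)%N -> hh d 0 = ind d 0.
Proof. by move=> d0; rewrite /hh /ind; case: d d0 => [|[|d]] //= _; lia. Qed.

Lemma hhS d i : (0 < d)%N -> hh d i.+1 = (hh d i + ind d i.+1)%N.
Proof.
move=> d0; rewrite /hh /ind.
case: (leqP d.-1 i) => h1; case: (leqP d.-1 i.+1) => h2;
  case: (leqP i.+1 (2 * d - 2)) => h3 /=; lia.
Qed.

Lemma Delta_prod d1 d2 i j : (0 < d1)%N -> (0 < d2)%N ->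
  Delta (fun i j => (hh d1 i * hh d2 j)%N) i j =
  (if [&& (d1.-1 <= i)%N, (i <= 2 * d1 - 2)%N,
         (d2.-1 <= j)%N & (j <= 2 * d2 - 2)%N] then 1 else 0).
Proof.
move=> p1 p2.
have -> : [&& (d1.-1 <= i)%N, (i <= 2 * d1 - 2)%N,
         (d2.-1 <= j)%N & (j <= 2 * d2 - 2)%N] = ind d1 i && ind d2 j.
  by rewrite /ind !andbA.
rewrite /Delta; case: i => [|i]; case: j => [|j].
- by rewrite !hh0 //; case: (ind d1 0); case: (ind d2 0); rewrite /= ?subr0.
- rewrite hh0 // hhS //; case: (ind d1 0); case: (ind d2 j.+1) => /=;
  rewrite !subr0 ?PoszD ?PoszM ?addr0; ring.
- rewrite hh0 // hhS //; case: (ind d1 i.+1); case: (ind d2 0) => /=;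
  rewrite !subr0 ?PoszD ?PoszM ?addr0; ring.
- rewrite !hhS //; case: (ind d1 i.+1); case: (ind d2 j.+1) => /=;
  rewrite !PoszM !PoszD; ring.
Qed.

Section Alg.
Variable K : fieldType.

Lemma ker_nz n N (M : 'M[K]_(n, N)) : (N < n)%N ->
  exists2 c : 'rV[K]_n, c != 0 & c *m M = 0.
Proof.
move=> h; have : kermx M != 0.
  rewrite -mxrank_eq0 mxrank_ker subn_eq0 -ltnNge.
  exact: leq_ltn_trans (rank_leq_col M) h.
by case/rowV0Pn => v /sub_kermxP vM vnz; exists v.
Qed.

Definition phi (L : seq K) (d s x a : nat) : K :=
  if (s.+1 <= d)%N then (a == x)%:R else L`_x ^+ a.

Lemma wexists (L : seq K) d s tau : size L = d -> tau \in L ->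
  exists w : 'I_(minn s.+1 d) -> K,
    forall a : 'I_s.+1, tau ^+ a = \sum_(x < minn s.+1 d) w x * phi L d s x a.
Proof.
move=> sL tL; rewrite /phi.
case: (leqP s.+1 d) => h.
  exists (fun x => tau ^+ x) => a.
  rewrite (bigD1 a) //= eqxx mulr1 big1 ?addr0 // => x nx.
  by rewrite eq_sym -(inj_eq val_inj) /= in nx; rewrite (negbTE nx) mulr0.
have hi : (index tau L < d)%N by rewrite -sL index_mem.
exists (fun x => ((x : nat) == index tau L)%:R) => a.
rewrite (bigD1 (Ordinal hi)) //= eqxx mul1r nth_index // big1 ?addr0 // => x nx.
by rewrite -(inj_eq val_inj) /= in nx; rewrite (negbTE nx) mul0r.
Qed.

Lemma sum_expand (mA mB mx my : nat) (R : 'I_mA -> 'I_mB -> K)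
  (A : 'I_mA -> K) (B : 'I_mB -> K) (w : 'I_mx -> K) (w' : 'I_my -> K)
  (ph : 'I_mx -> 'I_mA -> K) (ps : 'I_my -> 'I_mB -> K) :
  (forall a, A a = \sum_x w x * ph x a) -> (forall b, B b = \sum_y w' y * ps y b) ->
  \sum_a \sum_b R a b * (A a * B b) =
  \sum_x \sum_y w x * w' y * (\sum_a \sum_b R a b * (ph x a * ps y b)).
Proof.
move=> hA hB.
have e1 : forall a b, R a b * (A a * B b) =
    \sum_x \sum_y w x * w' y * (R a b * (ph x a * ps y b)).
  move=> a b; rewrite hA hB big_distrlr mulr_sumr; apply: eq_bigr => x _.
  rewrite mulr_sumr; apply: eq_bigr => y _; rewrite /=; ring.
under eq_bigr do under eq_bigr do rewrite e1.
under eq_bigr do rewrite exchange_big.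
rewrite exchange_big; apply: eq_bigr => x _.
under eq_bigr do rewrite exchange_big.
rewrite exchange_big; apply: eq_bigr => y _.
by rewrite mulr_sumr; apply: eq_bigr => a _; rewrite mulr_sumr.
Qed.

Lemma sum_expand2 (n mx my : nat) (cf : 'I_n -> K) (S : 'I_n -> 'I_mx -> 'I_my -> K)
  (w : 'I_mx -> K) (w' : 'I_my -> K) :
  \sum_k cf k * (\sum_x \sum_y w x * w' y * S k x y) =
  \sum_x \sum_y w x * w' y * (\sum_k cf k * S k x y).
Proof.
under eq_bigr do rewrite mulr_sumr.
rewrite exchange_big; apply: eq_bigr => x _.
under eq_bigr do rewrite mulr_sumr.
rewrite exchange_big; apply: eq_bigr => y _.
by rewrite mulr_sumr; apply: eq_bigr => k _; ring.
Qed.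

End Alg.

Section Main.
Variables (K : fieldType) (X : seq ((K * K) * (K * K))) (d1 d2 : nat) (F G : {mpoly K[4]}).
Notation S := {mpoly K[4]}.
Hypothesis Xne : X != [::].
Hypothesis Xok : forall P, P \in X -> point_ok P.
Hypothesis hF : bihom d1 0 F.
Hypothesis hG : bihom 0 d2 G.
Hypothesis hI : forall p, in_vanishing_ideal X p <-> in_ideal [:: F; G] p.
Hypothesis reg1 : forall p, in_vanishing_ideal X ('X_iX0 * p) -> in_vanishing_ideal X p.
Hypothesis reg2 : forall p, in_ideal [:: F; G; 'X_iX0] ('X_iY0 * p) ->
             in_ideal [:: F; G; 'X_iX0] p.

Lemma ideal2P p : in_ideal [:: F; G] p <-> exists a b, p = a * F + b * G.
Proof.
rewrite /in_ideal /=; split => [[c ->]|[a [b ->]]].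
  by exists (c 0%N), (c 1%N); rewrite !big_ord_recl big_ord0 /= addr0.
exists (fun k => if k == 0%N then a else b).
by rewrite !big_ord_recl big_ord0 /= addr0.
Qed.

Lemma ideal3P p : in_ideal [:: F; G; 'X_iX0] p <->
  exists a b c, p = a * F + b * G + c * 'X_iX0.
Proof.
rewrite /in_ideal /=; split => [[c ->]|[a [b [c ->]]]].
  by exists (c 0%N), (c 1%N), (c 2%N); rewrite !big_ord_recl big_ord0 /= addr0 addrA.
exists (fun k => if k == 0%N then a else if k == 1%N then b else c).
by rewrite !big_ord_recl big_ord0 /= addr0 addrA.
Qed.

Lemma ideal_vanish i j p : bihom i j p -> in_ideal [:: F; G] p ->
  forall P, P \in X -> eval_pt P p = 0.
Proof. by move=> hp /hI /(vanishP _ hp). Qed.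

Lemma vanish_ideal i j p : bihom i j p -> (forall P, P \in X -> eval_pt P p = 0) ->
  in_ideal [:: F; G] p.
Proof. by move=> hp h; apply/hI/(vanishP _ hp). Qed.

Lemma F_vanish P : P \in X -> eval_pt P F = 0.
Proof.
apply: (ideal_vanish hF); apply/ideal2P; exists 1, 0.
by rewrite mul1r mul0r addr0.
Qed.

Lemma G_vanish P : P \in X -> eval_pt P G = 0.
Proof.
apply: (ideal_vanish hG); apply/ideal2P; exists 0, 1.
by rewrite mul1r mul0r add0r.
Qed.

Definition P0 : (K * K) * (K * K) := ((0, 0), (0, 0)).

Lemma X0in : nth P0 X 0 \in X.
Proof. by apply: mem_nth; rewrite lt0n size_eq0. Qed.

Lemma one_notin : ~ in_ideal [:: F; G] 1.
Proof.
move=> h; have := ideal_vanish (@bihomC K 1) _ X0in; rewrite mpolyC1 => /(_ h).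
by rewrite /eval_pt meval1 => /eqP; rewrite oner_eq0.
Qed.

Lemma const_zero (p : S) : bihom 0 0 p -> in_ideal [:: F; G] p -> p = 0.
Proof.
move=> hp hin; rewrite (bihom_const hp); set c := p@_0%MM.
case: (eqVneq c 0) => [->|cnz]; first by rewrite mpolyC0.
exfalso; apply: one_notin; move/ideal2P: hin => [a [b e]].
apply/ideal2P; exists (c^-1%:MP * a), (c^-1%:MP * b).
rewrite -!mulrA -mulrDr -e (bihom_const hp) -/c.
apply/mpolyP => m; rewrite -mpolyC1 mcoeffCM !mcoeffC mulrA mulVf // mul1r.

Qed.

Lemma d1_0 : d1 = 0%N -> F = 0.
Proof.
move=> e; apply: const_zero; first by move: hF hG; rewrite e.
by apply/ideal2P; exists 1, 0; rewrite mul1r mul0r addr0.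
Qed.

Lemma d2_0 : d2 = 0%N -> G = 0.
Proof.
move=> e; apply: const_zero; first by move: hF hG; rewrite e.
by apply/ideal2P; exists 0, 1; rewrite mul1r mul0r add0r.
Qed.

Lemma x0nz P : P \in X -> P.1.1 != 0.
Proof.
move=> PX; apply/negP => /eqP z.
have P12 : P.1.2 != 0.
  by case: (Xok PX) => /negP h _; apply/negP => /eqP z2; apply: h; apply/eqP; rewrite [P.1]surjective_pairing z z2.
set l := [seq Q <- X | Q.1.1 != 0].
set p := \prod_(Q <- l) lin iX0 iX1 Q.1.2 Q.1.1.
have hp : bihom (size l) 0 p.
  by have := bihom_prod (l:=l) (fun Q => bihom_linx (c0:=Q.1.2) (c1:=Q.1.1)); rewrite mul1n mul0n.
have hXp : bihom (1 + size l) (0 + 0) ('X_iX0 * p) := bihomM (@bihom_X0 K) hp.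
have : in_vanishing_ideal X ('X_iX0 * p).
  apply/(vanishP _ hXp) => Q QX; rewrite /eval_pt mevalM mevalXU meval_prod /=.
  case: (eqVneq Q.1.1 0) => [->|nz]; first by rewrite mul0r.
  apply/eqP; rewrite mulf_eq0 !prodf_seq_eq0; apply/orP; right; apply/hasP. exists Q.
    by rewrite mem_filter nz QX.
  by rewrite lin_eval /= mulrC subrr.
move=> /reg1 /(vanishP _ hp) /(_ P PX); rewrite /eval_pt meval_prod /=.
apply/eqP; rewrite prodf_seq_neq0; apply/allP => Q; rewrite mem_filter => /andP[nz _].
by rewrite lin_eval /= z mulr0 sub0r oppr_eq0 mulf_neq0.
Qed.


Lemma meval_scale_x s (p : S) v u : bihom s 0 p -> v iX0 != 0 ->
  p.@[v] = v iX0 ^+ s * p.@[affv (v iX1 / v iX0) u].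
Proof.
move=> hp n0; rewrite (meval_bihom v hp) (meval_bihom (affv _ _) hp) mulr_sumr.
apply: eq_bigr => a _; rewrite !big_ord1 /affv /= !expr0 !expr1n !mulr1 !mul1r.
have ha : (a <= s)%N by rewrite -ltnS.
by rewrite (scale_aux _ n0 ha); ring.
Qed.

Definition T := undup [seq tau P | P <- X].
Lemma T_uniq : uniq T. Proof. exact: undup_uniq. Qed.
Lemma tauT P : P \in X -> tau P \in T.
Proof. by move=> PX; rewrite mem_undup; apply: map_f. Qed.
Lemma Tex t : t \in T -> exists2 P, P \in X & tau P = t.
Proof. by rewrite mem_undup => /mapP [P PX ->]; exists P. Qed.

Lemma F_aff t u : t \in T -> F.@[affv t u] = 0.
Proof.
case/Tex => P PX <-; have := F_vanish PX; rewrite eval_ptE.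
rewrite (meval_scale_x u hF) /= ?x0nz // => /eqP; rewrite mulf_eq0 expf_eq0.
by rewrite (negbTE (x0nz PX)) andbF /= => /eqP.
Qed.

Lemma F_affE t u : F.@[affv t u] = \sum_(a < d1.+1) F@_(mon d1 0 a 0) * t ^+ a.
Proof.
rewrite (meval_aff _ _ hF); apply: eq_bigr => a _.
by rewrite big_ord1 /= expr0 mulr1.
Qed.

Definition LT : S := \prod_(t <- T) lin iX0 iX1 t 1.

Lemma LT_bihom : bihom (size T) 0 LT.
Proof. by have := bihom_prod (l:=T) (fun t => bihom_linx (c0:=t) (c1:=1)); rewrite mul1n mul0n. Qed.

Lemma LT_nz : LT != 0.
Proof.
apply/negP => /eqP e; have : LT.@[pv ((0, 1), (0, 0))] != 0.
  rewrite meval_prod prodf_seq_neq0; apply/allP => t _.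
  by rewrite lin_eval /= mulr0 mul1r sub0r oppr_eq0 oner_eq0.
by rewrite e meval0 eqxx.
Qed.

Lemma LT_in : in_ideal [:: F; G] LT.
Proof.
apply: (vanish_ideal LT_bihom) => Q QX.
rewrite /eval_pt meval_prod; apply/eqP; rewrite prodf_seq_eq0; apply/hasP.
exists (tau Q); first exact: tauT.
by rewrite lin_eval /= /tau mul1r divfK ?subrr ?x0nz.
Qed.

Lemma bicomp_G0 i (b : S) : (0 < d2)%N \/ G = 0 -> bicomp i 0 (G * b) = 0.
Proof.
case=> [d2p|->]; last by rewrite mul0r bicomp0.
by rewrite (bicompM _ _ _ hG) andbC leqNgt d2p.
Qed.

Lemma d2_case : (0 < d2)%N \/ G = 0.
Proof. by case: d2 d2_0 => [|n] h; [right; apply: h | left]. Qed.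

Lemma LT_decomp : exists r, LT = if (d1 <= size T)%N then F * r else 0.
Proof.
have [a [b e]] := (ideal2P LT).1 LT_in.
exists (bicomp (size T - d1) 0 a).
rewrite -(bicomp_id LT_bihom) e bicompD (mulrC b) (bicomp_G0 _ _ d2_case) addr0.
by rewrite mulrC (bicompM _ _ _ hF) leq0n andbT subn0.
Qed.


Lemma F_nz : F != 0.
Proof.
apply/negP => /eqP F0; have [r e] := LT_decomp.
by move: LT_nz; rewrite e F0 mul0r if_same eqxx.
Qed.

Lemma d1_le_T : (d1 <= size T)%N.
Proof.
have [r e] := LT_decomp; move: LT_nz; rewrite e.
by case: ifP => // _; rewrite eqxx.
Qed.

Lemma coef_nz_expand s t (p : S) : bihom s t p -> p != 0 ->
  exists a, exists b, [/\ (a <= s)%N, (b <= t)%N & p@_(mon s t a b) != 0].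
Proof.
move=> hp pnz.
case: (boolP [exists a : 'I_s.+1, [exists b : 'I_t.+1, p@_(mon s t a b) != 0]]).
  move=> /existsP [a /existsP [b nz]].
  by exists a, b; split => //; rewrite -ltnS ltn_ord.
move=> /existsPn h; exfalso; move/eqP: pnz; apply.
rewrite (bihom_expand hp) big1 // => a _; rewrite big1 // => b _.
have /existsPn /(_ b) := h a; rewrite negbK => /eqP ->.
by rewrite scale0r.
Qed.

Lemma F_coef : exists2 a, (a <= d1)%N & F@_(mon d1 0 a 0) != 0.
Proof.
have [a [b [ha hb nz]]] := coef_nz_expand hF F_nz.
by exists a => //; move: hb nz; rewrite leqn0 => /eqP ->.
Qed.

Lemma T_size : size T = d1.
Proof.
apply/eqP; rewrite eqn_leq d1_le_T andbT.
apply: (roots_le T_uniq F_coef) => t tT.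
by rewrite -(F_affE t 0) F_aff.
Qed.

Lemma d1_pos : (0 < d1)%N.
Proof.
rewrite -T_size lt0n size_eq0; apply/eqP => e.
by have := tauT X0in; rewrite e in_nil.
Qed.


Lemma y0nz P : P \in X -> P.2.1 != 0.
Proof.
move=> PX; apply/negP => /eqP z.
have P22 : P.2.2 != 0.
  by case: (Xok PX) => _ /negP h; apply/negP => /eqP z2; apply: h; apply/eqP; rewrite [P.2]surjective_pairing z z2.
set l := [seq Q <- X | Q.2.1 != 0].
set p := \prod_(Q <- l) lin iY0 iY1 Q.2.2 Q.2.1.
have hp : bihom 0 (size l) p.
  by have := bihom_prod (l:=l) (fun Q => bihom_liny (c0:=Q.2.2) (c1:=Q.2.1)); rewrite mul1n mul0n.
have hYp : bihom (0 + 0) (1 + size l) ('X_iY0 * p) := bihomM (@bihom_Y0 K) hp.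
have h1 : in_ideal [:: F; G] ('X_iY0 * p).
  apply: (vanish_ideal hYp) => Q QX; rewrite /eval_pt mevalM mevalXU meval_prod /=.
  case: (eqVneq Q.2.1 0) => [->|nz]; first by rewrite mul0r.
  apply/eqP; rewrite mulf_eq0 !prodf_seq_eq0; apply/orP; right; apply/hasP. exists Q.
    by rewrite mem_filter nz QX.
  by rewrite lin_eval /= mulrC subrr.
have h2 : in_ideal [:: F; G; 'X_iX0] ('X_iY0 * p).
  have [a [b e]] := (ideal2P _).1 h1.
  by apply/ideal3P; exists a, b, 0; rewrite mul0r addr0.
have [a [b [c e]]] := (ideal3P _).1 (reg2 h2).
have h3 : in_ideal [:: F; G] p.
  rewrite -(bicomp_id hp) e !bicompD (mulrC a) (mulrC b) (mulrC c).
  rewrite (bicompM _ _ _ hF) (bicompM _ _ _ (@bihom_X0 K)) (bicompM _ _ _ hG).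
  rewrite leqNgt d1_pos /= addr0 add0r.
  case: ifP => _; apply/ideal2P; first by exists 0, (bicomp (0 - 0) (size l - d2) b); rewrite mul0r add0r mulrC.
  by exists 0, 0; rewrite !mul0r addr0.
have := ideal_vanish hp h3 PX; rewrite /eval_pt meval_prod /=.
apply/eqP; rewrite prodf_seq_neq0; apply/allP => Q; rewrite mem_filter => /andP[nz _].
by rewrite lin_eval /= z mulr0 sub0r oppr_eq0 mulf_neq0.
Qed.


Definition U := undup [seq ups P | P <- X].
Lemma U_uniq : uniq U. Proof. exact: undup_uniq. Qed.
Lemma upsU P : P \in X -> ups P \in U.
Proof. by move=> PX; rewrite mem_undup; apply: map_f. Qed.
Lemma Uex u : u \in U -> exists2 P, P \in X & ups P = u.
Proof. by rewrite mem_undup => /mapP [P PX ->]; exists P. Qed.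

Lemma G_aff t u : u \in U -> G.@[affv t u] = 0.
Proof.
case/Uex => P PX <-; have := G_vanish PX.
rewrite (eval_pt_scale hG) ?x0nz ?y0nz // => /eqP; rewrite !mulf_eq0 !expf_eq0.
rewrite (negbTE (x0nz PX)) (negbTE (y0nz PX)) !andbF /= => /eqP.
by rewrite (meval_aff_y _ t _ hG).
Qed.

Lemma G_affE t u : G.@[affv t u] = \sum_(b < d2.+1) G@_(mon 0 d2 0 b) * u ^+ b.
Proof.
rewrite (meval_aff _ _ hG) big_ord1; apply: eq_bigr => b _.
by rewrite /= expr0 mul1r.
Qed.

Definition LU : S := \prod_(u <- U) lin iY0 iY1 u 1.

Lemma LU_bihom : bihom 0 (size U) LU.
Proof. by have := bihom_prod (l:=U) (fun u => bihom_liny (c0:=u) (c1:=1)); rewrite mul1n mul0n. Qed.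

Lemma LU_nz : LU != 0.
Proof.
apply/negP => /eqP e; have : LU.@[pv ((0, 0), (0, 1))] != 0.
  rewrite meval_prod prodf_seq_neq0; apply/allP => t _.
  by rewrite lin_eval /= mulr0 mul1r sub0r oppr_eq0 oner_eq0.
by rewrite e meval0 eqxx.
Qed.

Lemma LU_in : in_ideal [:: F; G] LU.
Proof.
apply: (vanish_ideal LU_bihom) => Q QX.
rewrite /eval_pt meval_prod; apply/eqP; rewrite prodf_seq_eq0; apply/hasP.
exists (ups Q); first exact: upsU.
by rewrite lin_eval /= /ups mul1r divfK ?subrr ?y0nz.
Qed.

Lemma LU_decomp : exists r, LU = if (d2 <= size U)%N then G * r else 0.
Proof.
have [a [b e]] := (ideal2P LU).1 LU_in.
exists (bicomp 0 (size U - d2) b).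
rewrite -(bicomp_id LU_bihom) e bicompD (mulrC a) (mulrC b).
by rewrite (bicompM _ _ _ hF) (bicompM _ _ _ hG) leqNgt d1_pos /= add0r.
Qed.

Lemma G_nz : G != 0.
Proof.
apply/negP => /eqP G0; have [r e] := LU_decomp.
by move: LU_nz; rewrite e G0 mul0r if_same eqxx.
Qed.

Lemma d2_le_U : (d2 <= size U)%N.
Proof.
have [r e] := LU_decomp; move: LU_nz; rewrite e.
by case: ifP => // _; rewrite eqxx.
Qed.

Lemma G_coef : exists2 b, (b <= d2)%N & G@_(mon 0 d2 0 b) != 0.
Proof.
have [a [b [ha hb nz]]] := coef_nz_expand hG G_nz.
by exists b => //; move: ha nz; rewrite leqn0 => /eqP ->.
Qed.

Lemma U_size : size U = d2.
Proof.
apply/eqP; rewrite eqn_leq d2_le_U andbT.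
apply: (roots_le U_uniq G_coef) => u uU.
by rewrite -(G_affE 0 u) G_aff.
Qed.

Lemma d2_pos : (0 < d2)%N.
Proof.
rewrite -U_size lt0n size_eq0; apply/eqP => e.
by have := upsU X0in; rewrite e in_nil.
Qed.


Lemma grid t u : t \in T -> u \in U -> exists2 P, P \in X & (tau P = t /\ ups P = u).
Proof.
move=> tT uU.
case: (boolP (has (fun P => (tau P == t) && (ups P == u)) X)).
  by move=> /hasP [P PX /andP[/eqP e1 /eqP e2]]; exists P.
move=> /hasPn h; exfalso.
set A := \prod_(t' <- rem t T) lin iX0 iX1 t' 1.
set B := \prod_(u' <- rem u U) lin iY0 iY1 u' 1.
have hA : bihom (size (rem t T)) 0 A.
  by have := bihom_prod (l:=rem t T) (fun x => bihom_linx (c0:=x) (c1:=1)); rewrite mul1n mul0n.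
have hB : bihom 0 (size (rem u U)) B.
  by have := bihom_prod (l:=rem u U) (fun x => bihom_liny (c0:=x) (c1:=1)); rewrite mul1n mul0n.
have hAB := bihomM hA hB.
have : in_ideal [:: F; G] (A * B).
  apply: (vanish_ideal hAB) => Q QX; rewrite /eval_pt mevalM !meval_prod.
  case: (eqVneq (tau Q) t) => [e|ne].
    have nu : ups Q != u by have := h Q QX; rewrite e eqxx.
    apply/eqP; rewrite mulf_eq0 !prodf_seq_eq0; apply/orP; right; apply/hasP.
    exists (ups Q); first by rewrite (mem_rem_uniq _ U_uniq) !inE nu upsU.
    by rewrite lin_eval /= /ups mul1r divfK ?subrr ?y0nz.
  apply/eqP; rewrite mulf_eq0 prodf_seq_eq0; apply/orP; left; apply/hasP.
  exists (tau Q); first by rewrite (mem_rem_uniq _ T_uniq) !inE ne tauT.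
  by rewrite lin_eval /= /tau mul1r divfK ?subrr ?x0nz.
move=> /ideal2P [a [b e]].
have := congr1 (meval (affv t u)) e.
rewrite !mevalD !mevalM F_aff // G_aff // !mulr0 addr0 => /eqP.
rewrite mulf_eq0 /A /B !meval_prod => /orP []; apply/negP.
  rewrite prodf_seq_neq0; apply/allP => x; rewrite (mem_rem_uniq _ T_uniq) !inE => /andP[nx _].
  by rewrite lin_eval /affv /= mulr1 mul1r subr_eq0.
rewrite prodf_seq_neq0; apply/allP => x; rewrite (mem_rem_uniq _ U_uniq) !inE => /andP[nx _].
by rewrite lin_eval /affv /= mulr1 mul1r subr_eq0.
Qed.


Definition Dk : S := F^`M(iX1) * G^`M(iY1).

Lemma D_bihom : bihom d1.-1 d2.-1 Dk.
Proof.
have := bihomM (mderiv_bihom_x hF) (mderiv_bihom_y hG).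
by rewrite addn0 add0n.
Qed.

Lemma monUX1 s t a b : (a < s)%N -> (mon s.-1 t a b + U_(iX1))%MM = mon s t a.+1 b.
Proof.
move=> h; apply/mnmP => k; rewrite mnmDE mnm1E !mnmE.
by case: k => -[|[|[|[|]]]] //= _; lia.
Qed.

Lemma monUY1 s t a b : (b < t)%N -> (mon s t.-1 a b + U_(iY1))%MM = mon s t a b.+1.
Proof.
move=> h; apply/mnmP => k; rewrite mnmDE mnm1E !mnmE.
by case: k => -[|[|[|[|]]]] //= _; lia.
Qed.

Lemma sum_pred (n : nat) (f : nat -> K) : (0 < n)%N ->
  \sum_(a < n.-1.+1) f a = \sum_(a < n) f a.
Proof. by move=> h; rewrite -!(big_mkord xpredT) prednK. Qed.

Lemma FX_aff t u : (F^`M(iX1)).@[affv t u] =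
  \sum_(a < d1) (F@_(mon d1 0 a.+1 0) *+ a.+1) * t ^+ a.
Proof.
rewrite (meval_aff _ _ (mderiv_bihom_x hF)).
rewrite (sum_pred (fun a => \sum_(b < 1) (F^`M(iX1))@_(mon d1.-1 0 a b) * (t ^+ a * u ^+ b))) ?d1_pos //.
apply: eq_bigr => a _; rewrite big_ord1 /= expr0 mulr1 mcoeff_deriv mon1.
by rewrite monUX1.
Qed.

Lemma GY_aff t u : (G^`M(iY1)).@[affv t u] =
  \sum_(b < d2) (G@_(mon 0 d2 0 b.+1) *+ b.+1) * u ^+ b.
Proof.
rewrite (meval_aff _ _ (mderiv_bihom_y hG)) big_ord1 /=.
rewrite (sum_pred (fun b => (G^`M(iY1))@_(mon 0 d2.-1 0 b) * (t ^+ 0 * u ^+ b))) ?d2_pos //.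
apply: eq_bigr => b _; rewrite expr0 mul1r mcoeff_deriv mon3.
by rewrite monUY1.
Qed.

Lemma D_nz t u : t \in T -> u \in U -> Dk.@[affv t u] != 0.
Proof.
move=> tT uU; rewrite mevalM mulf_neq0 //.
  rewrite FX_aff; apply: (deriv_nz T_uniq T_size F_coef) => // x xT.
  by rewrite -(F_affE x 0) F_aff.
rewrite GY_aff; apply: (deriv_nz U_uniq U_size G_coef) => // x xU.
by rewrite -(G_affE 0 x) G_aff.
Qed.


Lemma bihom_exp a b (p : S) n : bihom a b p -> bihom (a * n) (b * n) (p ^+ n).
Proof.
move=> hp; elim: n => [|n IH]; first by rewrite expr0 !muln0 -mpolyC1; apply: bihomC.
by rewrite exprS !mulnS; apply: bihomM.
Qed.

Lemma prod_rem_eq0 (L : seq K) mx x x' p0 : (x' < mx)%N -> x' != x ->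
  \prod_(a <- rem x (iota 0 mx)) (nth 0 L a * p0 - nth 0 L x' * p0) = 0.
Proof.
move=> hx' ne; apply/eqP; rewrite prodf_seq_eq0; apply/hasP; exists x'.
  by rewrite (mem_rem_uniq _ (iota_uniq _ _)) !inE ne mem_iota.
by rewrite subrr eqxx.
Qed.

Lemma prod_rem_neq0 (L : seq K) mx x p0 : uniq L -> (mx <= size L)%N -> (x < mx)%N ->
  p0 != 0 -> \prod_(a <- rem x (iota 0 mx)) (nth 0 L a * p0 - nth 0 L x * p0) != 0.
Proof.
move=> uL hm hx nz; rewrite prodf_seq_neq0; apply/allP => a.
rewrite (mem_rem_uniq _ (iota_uniq _ _)) !inE mem_iota /= add0n => /andP[na ha] /=.
rewrite -mulrBl mulf_neq0 // subr_eq0 nth_uniq //; first exact: leq_trans ha hm.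
exact: leq_trans hx hm.
Qed.

Definition Lx (s mx x : nat) : S :=
  'X_iX0 ^+ (s.+1 - mx) * \prod_(a <- rem x (iota 0 mx)) lin iX0 iX1 (nth 0 T a) 1.
Definition Ly (t my y : nat) : S :=
  'X_iY0 ^+ (t.+1 - my) * \prod_(b <- rem y (iota 0 my)) lin iY0 iY1 (nth 0 U b) 1.

Lemma Lx_bihom s mx x : (0 < mx <= s.+1)%N -> (x < mx)%N -> bihom s 0 (Lx s mx x).
Proof.
move=> /andP[h0 h1] hx.
have e : s = (1 * (s.+1 - mx) + 1 * size (rem x (iota 0 mx)))%N.
  by rewrite size_rem ?mem_iota // size_iota; lia.
have h2 := bihom_exp (n:=s.+1 - mx) (@bihom_X0 K).
have h3 := bihom_prod (l:=rem x (iota 0 mx)) (fun a => bihom_linx (c0:=nth 0 T a) (c1:=1)).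
by have := bihomM h2 h3; rewrite !mul0n -e.
Qed.

Lemma Ly_bihom t my y : (0 < my <= t.+1)%N -> (y < my)%N -> bihom 0 t (Ly t my y).
Proof.
move=> /andP[h0 h1] hy.
have e : t = (1 * (t.+1 - my) + 1 * size (rem y (iota 0 my)))%N.
  by rewrite size_rem ?mem_iota // size_iota; lia.
have h2 := bihom_exp (n:=t.+1 - my) (@bihom_Y0 K).
have h3 := bihom_prod (l:=rem y (iota 0 my)) (fun b => bihom_liny (c0:=nth 0 U b) (c1:=1)).
by have := bihomM h2 h3; rewrite !mul0n -e.
Qed.

Lemma Lx_eval s mx x x' P : P \in X -> tau P = nth 0 T x' ->
  (Lx s mx x).@[pv P] = P.1.1 ^+ (s.+1 - mx) *
     \prod_(a <- rem x (iota 0 mx)) (nth 0 T a * P.1.1 - nth 0 T x' * P.1.1).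
Proof.
move=> PX e; rewrite /Lx mevalM rmorphXn /= mevalXU meval_prod; congr (_ * _).
by apply: eq_bigr => a _; rewrite lin_eval mul1r -e /tau divfK ?x0nz.
Qed.

Lemma Ly_eval t my y y' P : P \in X -> ups P = nth 0 U y' ->
  (Ly t my y).@[pv P] = P.2.1 ^+ (t.+1 - my) *
     \prod_(b <- rem y (iota 0 my)) (nth 0 U b * P.2.1 - nth 0 U y' * P.2.1).
Proof.
move=> PX e; rewrite /Ly mevalM rmorphXn /= mevalXU meval_prod; congr (_ * _).
by apply: eq_bigr => a _; rewrite lin_eval mul1r -e /ups divfK ?y0nz.
Qed.


Definition PnX i j n := exists g : 'I_n -> S,
  (forall k, in_ideal (kahler_gens [:: F; G]) (g k) /\ bihom i j (g k)) /\
  (forall c : 'I_n -> K, in_vanishing_ideal X (\sum_(k < n) c k *: g k) -> forall k, c k = 0).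

Lemma D_eval_nz P : P \in X -> eval_pt P Dk != 0.
Proof.
move=> PX; rewrite (eval_pt_scale D_bihom) ?x0nz ?y0nz // !mulf_neq0 ?expf_neq0 ?x0nz ?y0nz //.
by apply: D_nz; [apply: tauT|apply: upsU].
Qed.


Lemma lower i j : (d1.-1 <= i)%N -> (d2.-1 <= j)%N ->
  PnX i j (minn (i - d1.-1).+1 d1 * minn (j - d2.-1).+1 d2).
Proof.
move=> hi hj.
set s := (i - d1.-1)%N; set t := (j - d2.-1)%N.
set mx := minn s.+1 d1; set my := minn t.+1 d2.
have hmx : (0 < mx <= s.+1)%N by rewrite /mx; have := d1_pos; lia.
have hmy : (0 < my <= t.+1)%N by rewrite /my; have := d2_pos; lia.
have mxT : (mx <= size T)%N by rewrite T_size /mx geq_minr.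
have myU : (my <= size U)%N by rewrite U_size /my geq_minr.
have my0 : (0 < my)%N by case/andP: hmy.
have hx (k : 'I_(mx * my)) : (k %/ my < mx)%N by rewrite ltn_divLR.
have hy (k : 'I_(mx * my)) : (k %% my < my)%N by rewrite ltn_mod.
pose g (k : 'I_(mx * my)) := Dk * (Lx s mx (k %/ my) * Ly t my (k %% my)).
have gb k : bihom i j (g k).
  have := bihomM D_bihom (bihomM (Lx_bihom hmx (hx k)) (Ly_bihom hmy (hy k))).
  by rewrite addn0 add0n /s /t !subnKC.
exists g; split.
  by move=> k; split => //; apply/(kahlerP hF hG); exists (Lx s mx (k %/ my) * Ly t my (k %% my)).
move=> c hc k.
have xT : nth 0 T (k %/ my) \in T by apply: mem_nth; apply: leq_trans (hx k) mxT.
have yU : nth 0 U (k %% my) \in U by apply: mem_nth; apply: leq_trans (hy k) myU.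
have [P PX [e1 e2]] := grid xT yU.
have hs : bihom i j (\sum_(k < mx * my) c k *: g k).
  by apply: bihom_sum => k' _; apply: bihomZ.
have := (vanishP _ hs).1 hc P PX; rewrite eval_ptE raddf_sum (bigD1 k) //= big1; last first.
  move=> k' nk'; rewrite /g mevalZ (mevalM _ Dk (Lx _ _ _ * Ly _ _ _)) (mevalM _ (Lx _ _ _)) (Lx_eval _ _ _ PX e1) (Ly_eval _ _ _ PX e2).
  case: (eqVneq (k' %/ my)%N (k %/ my)%N) => [ex|nx]; last first.
    by rewrite (prod_rem_eq0 _ _ (hx k)) ?mulr0 ?mul0r ?mulr0 // eq_sym.
  case: (eqVneq (k' %% my)%N (k %% my)%N) => [ey|ny]; last first.
    by rewrite (prod_rem_eq0 _ _ (hy k)) ?mulr0 ?mul0r ?mulr0 // eq_sym.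
  by move: nk'; rewrite -val_eqE /= (div.divn_eq k' my) (div.divn_eq k my) ex ey eqxx.
rewrite addr0 mevalZ => /eqP; rewrite mulf_eq0 => /orP[/eqP //|H]; exfalso; move: H; apply/negP.
rewrite /g (mevalM _ Dk (Lx _ _ _ * Ly _ _ _)) (mevalM _ (Lx _ _ _)) (Lx_eval _ _ _ PX e1) (Ly_eval _ _ _ PX e2).
rewrite !mulf_neq0 ?expf_neq0 ?x0nz ?y0nz ?prod_rem_neq0 ?T_uniq ?U_uniq ?x0nz ?y0nz ?hx ?hy //.
exact: D_eval_nz.
Qed.


Lemma idx_lt (mx my : nat) (x : 'I_mx) (y : 'I_my) : (x * my + y < mx * my)%N.
Proof.
have hx := ltn_ord x; have hy := ltn_ord y.
apply: (@leq_trans (x.+1 * my)); first by rewrite mulSn addnC ltn_add2r.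
by rewrite leq_mul2r hx orbT.
Qed.

Lemma upper i j n : PnX i j n -> (n <= hh d1 i * hh d2 j)%N.
Proof.
case=> g [hg hind].
case: (leqP n 0) => [n0|npos]; first exact: leq_trans n0 (leq0n _).
have gD k : exists q, g k = Dk * q by apply/(kahlerP hF hG); case: (hg k).
case: (boolP ((d1.-1 <= i)%N && (d2.-1 <= j)%N)) => [/andP[hi hj]|nc]; last first.
  exfalso.
  have g0 k : g k = 0.
    have [q e] := gD k; rewrite -(bicomp_id (hg k).2) e (bicompM _ _ _ D_bihom).
    by rewrite (negbTE nc).
  have hv : in_vanishing_ideal X (\sum_(k < n) (fun _ => (1 : K)) k *: g k).
    rewrite big1; last by move=> k _; rewrite g0 scaler0.
    by apply/(vanishP _ (@bihom0 K i j)) => P _; rewrite /eval_pt meval0.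
  by have /eqP := hind _ hv (Ordinal npos); rewrite oner_eq0.
set s := (i - d1.-1)%N; set t := (j - d2.-1)%N.
have [r hr] : exists r : 'I_n -> S, forall k, g k = Dk * r k /\ bihom s t (r k).
  have [r0 hr0] := fin_all_exists gD.
  exists (fun k => bicomp s t (r0 k)) => k.
  have e := hr0 k.
  rewrite -(bicomp_id (hg k).2) {1}e (bicompM _ _ _ D_bihom) hi hj /=.
  by split => //; apply: bicomp_bihom.
rewrite /hh hi hj.
set mx := minn (i - d1.-1).+1 d1; set my := minn (j - d2.-1).+1 d2.
rewrite leqNgt; apply/negP => hlt.
pose M := \matrix_(k < n, l < mx * my) \sum_(a < s.+1) \sum_(b < t.+1)
   (r k)@_(mon s t a b) * (phi T d1 s (l %/ my) a * phi U d2 t (l %% my) b).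
have [c cnz cM] := @ker_nz K n (mx * my) M hlt.
suff c0 : forall k, c 0 k = 0.
  by move: cnz; apply/negP; rewrite negbK; apply/eqP/matrixP => z k; rewrite (ord1 z) c0 mxE.
apply: hind.
have hs : bihom i j (\sum_(k < n) c 0 k *: g k).
  by apply: bihom_sum => k _; apply: bihomZ; case: (hg k).
apply/(vanishP _ hs) => P PX.
have [w hw] := wexists s T_size (tauT PX).
have [w' hw'] := wexists t U_size (upsU PX).
rewrite eval_ptE raddf_sum /=.
have e k : (c 0 k *: g k).@[pv P] = Dk.@[pv P] * (P.1.1 ^+ s * P.2.1 ^+ t) *
    (c 0 k * \sum_x \sum_y w x * w' y *
       (\sum_(a < s.+1) \sum_(b < t.+1) (r k)@_(mon s t a b) *
          (phi T d1 s x a * phi U d2 t y b))).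
  case: (hr k) => -> hb; rewrite mevalZ mevalM (meval_scale (v:=pv P) hb) /= ?x0nz ?y0nz //.
  rewrite -/(tau P) -/(ups P).
  rewrite (meval_aff _ _ hb).
  rewrite (@sum_expand K _ _ _ _ (fun a b => (r k)@_(mon s t a b)) _ _ w w' _ _ hw hw').
  by rewrite /eval_pt; ring.
rewrite (eq_bigr _ (fun k _ => e k)) -mulr_sumr sum_expand2.
rewrite big1 ?mulr0 // => x _; rewrite big1 // => y _.
have hl := idx_lt x y.
have := congr1 (fun A : 'rV_(mx * my) => A 0 (Ordinal hl)) cM.
rewrite /= !mxE => h; apply/eqP; rewrite mulf_eq0; apply/orP; right; apply/eqP.
apply: (etrans _ h); apply: eq_bigr => k _; rewrite /M mxE; congr (_ * _).
have my0 : (0 < my)%N by apply: leq_ltn_trans (leq0n _) (ltn_ord y).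
rewrite /= divnMDl // divn_small // addn0 modnMDl modn_small //.
Qed.


Lemma maxnat_eq (Q : nat -> Prop) N : Q N -> (forall m, Q m -> (m <= N)%N) -> maxnat Q = N.
Proof.
move=> hN hle; rewrite /maxnat; case: excluded_middle_informative => [h|h]; last first.
  by exfalso; apply: h; exists N.
case: (constructive_indefinite_description _ h) => n [Qn hn] /=.
by apply/eqP; rewrite eqn_leq hle //= hn.
Qed.

Lemma HF_eq i j : HF_quot_ideal (in_vanishing_ideal X) (kahler_gens [:: F; G]) i j =
  (hh d1 i * hh d2 j)%N.
Proof.
apply: (maxnat_eq (Q := PnX i j)); last exact: (@upper i j).
rewrite /hh; case: (boolP ((d1.-1 <= i)%N && (d2.-1 <= j)%N)) => [/andP[hi hj]|nc].
  by rewrite hi hj; apply: lower.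
have -> : ((if (d1.-1 <= i)%N then minn (i - d1.-1).+1 d1 else 0) *
     (if (d2.-1 <= j)%N then minn (j - d2.-1).+1 d2 else 0) = 0)%N.
  by move: nc; case: (d1.-1 <= i)%N; case: (d2.-1 <= j)%N => //=; rewrite muln0.
exists (fun _ => 0); split; last by move=> c _ [].
move=> k; split; last exact: bihom0.
by apply/(kahlerP hF hG); exists 0; rewrite mulr0.
Qed.

End Main.

Unset Implicit Arguments.

Lemma Delta_ext (H1 H2 : nat -> nat -> nat) i j : (forall i j, H1 i j = H2 i j) ->
  Delta H1 i j = Delta H2 i j.
Proof. by move=> e; rewrite /Delta; case: i => [|i]; case: j => [|j]; rewrite !e. Qed.

Theorem corollary7p4 (K : fieldType) (X : seq ((K * K) * (K * K)))
    (d1 d2 : nat) (F G : {mpoly K[4]}) :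
  [pchar K] =i pred0 ->
  X != [::] -> (forall P, P \in X -> point_ok P) ->
  (* I_X is generated by F of degree (d1,0) and G of degree (0,d2) *)
  bihom d1 0 F -> bihom 0 d2 G ->
  (forall p, in_vanishing_ideal X p <-> in_ideal [:: F; G] p) ->
  (d1 <= d2)%N ->
  (* x_0, y_0 is a regular sequence in R_X = S / I_X *)
  (forall p, in_vanishing_ideal X ('X_iX0 * p) -> in_vanishing_ideal X p) ->
  (forall p, in_ideal [:: F; G; 'X_iX0] ('X_iY0 * p) ->
             in_ideal [:: F; G; 'X_iX0] p) ->
  forall i j : nat,
    Delta (HF_quot_ideal (in_vanishing_ideal X) (kahler_gens [:: F; G])) i j =
    (if [&& (d1.-1 <= i)%N, (i <= 2 * d1 - 2)%N,
            (d2.-1 <= j)%N & (j <= 2 * d2 - 2)%N] then 1 else 0).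
Proof.
move=> _ Xne Xok hF hG hI _ reg1 reg2 i j.
rewrite (@Delta_ext _ (fun i j => (hh d1 i * hh d2 j)%N)); last first.
  by move=> i' j'; apply: (HF_eq Xne Xok hF hG hI reg1 reg2).
apply: Delta_prod.
  exact: (d1_pos Xne Xok hF hG hI reg1).
exact: (d2_pos Xne Xok hF hG hI reg1 reg2).
Qed.
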